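(* Let $A$ be an AUF algebra. The following are equivalent: (1) $A$ has a generating idempotent; (2) there are only finitely many isomorphism classes of irreducible quasicoherent left $A$-modules; (3) $A$ has only finitely many equivalence classes of primitive idempotents.
   Context: All algebras are associative $\mathbb C$-algebras, not necessarily unital. An idempotent is $e$ with $e^2=e$; for idempotents $f\le e$ means $ef=fe=f$; a nonzero idempotent is primitive if its only sub-idempotents are $0$ and itself. An algebra $A$ is AUF if there is a family $(e_i)_{i\in\mathfrak I}$ of mutually orthogonal idempotents with $\dim e_iAe_j<\infty$ and $A=\sum_{i,j}e_iAe_j$. A left $A$-module $M$ is quasicoherent if $\xi\in A\xi$ for all $\xi\in M$. Irreducible means nonzero with no nonzero proper submodules. An idempotent $e$ is generating if every irreducible quasicoherent left $A$-module is a quotient of $Ae$. Two idempotents $p,q$ are equivalent if there are $u\in qAp$, $v\in pAq$ with $vu=p$, $uv=q$. *)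

(* Defs.v *)
From HB Require Import structures.
From mathcomp Require Import all_boot all_order all_algebra.
From mathcomp Require Import complex Rstruct.
From Stdlib Require Import Reals.
Set Implicit Arguments. Unset Strict Implicit. Unset Printing Implicit Defensive.
Import GRing.Theory.
Local Open Scope ring_scope.

Definition C : fieldType := (Rdefinitions.R)[i].

Record nuAlg := NuAlg {
  alg_car :> lmodType C;
  amul : alg_car -> alg_car -> alg_car;
  amulA : forall x y z, amul x (amul y z) = amul (amul x y) z;
  amulDl : forall x y z, amul (x + y) z = amul x z + amul y z;
  amulDr : forall x y z, amul x (y + z) = amul x y + amul x z;
  amulZl : forall (c : C) x y, amul (c *: x) y = c *: amul x y;
  amulZr : forall (c : C) x y, amul x (c *: y) = c *: amul x y
}.

Section Defs.
Variable A : nuAlg.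
Local Notation "x * y" := (amul x y) : ring_scope.

Definition idempotent (e : A) : Prop := e * e = e.
Definition idem_le (f e : A) : Prop := e * f = f /\ f * e = f.
Definition primitive (e : A) : Prop :=
  idempotent e /\ e <> 0 /\
  forall f, idempotent f -> idem_le f e -> f = 0 \/ f = e.
Definition in_corner (q p u : A) : Prop := exists x, u = q * x * p.
Definition idem_equiv (p q : A) : Prop :=
  exists u v, in_corner q p u /\ in_corner p q v /\ v * u = p /\ u * v = q.

(* Finite-dimensionality of a subset of A (here always a subspace):
   spanned by a finite list of vectors. *)
Definition fin_dim (S : A -> Prop) : Prop :=
  exists s : seq A, forall x, S x ->
    exists c : 'I_(size s) -> C, x = \sum_(k < size s) c k *: s`_k.

Definition AUF : Prop :=
  exists (I : Type) (e : I -> A),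
    (forall i, idempotent (e i)) /\
    (forall i j, i <> j -> e i * e j = 0) /\
    (forall i j, fin_dim (in_corner (e i) (e j))) /\
    (forall a : A, exists s : seq (I * I * A),
        a = \sum_(t <- s) e t.1.1 * t.2 * e t.1.2).
End Defs.

Record amod (A : nuAlg) := AMod {
  mod_car :> lmodType C;
  act : A -> mod_car -> mod_car;
  actDl : forall a b m, act (a + b) m = act a m + act b m;
  actDr : forall a m n, act a (m + n) = act a m + act a n;
  actZl : forall (c : C) a m, act (c *: a) m = c *: act a m;
  actZr : forall (c : C) a m, act a (c *: m) = c *: act a m;
  actM : forall a b m, act (amul a b) m = act a (act b m)
}.

Section Modules.
Variable A : nuAlg.

Definition quasicoherent (M : amod A) : Prop :=
  forall m : M, exists a : A, act a m = m.

Definition submodule (M : amod A) (P : M -> Prop) : Prop :=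
  P 0 /\ (forall x y, P x -> P y -> P (x + y)) /\
  (forall (c : C) x, P x -> P (c *: x)) /\
  (forall a x, P x -> P (act a x)).

Definition irreducible (M : amod A) : Prop :=
  (exists m : M, m <> 0) /\
  forall P : M -> Prop, submodule P -> (forall m, P m -> m = 0) \/ (forall m, P m).

Definition mod_iso (M N : amod A) : Prop :=
  exists f : M -> N,
    (forall x y, f (x + y) = f x + f y) /\
    (forall (c : C) x, f (c *: x) = c *: f x) /\
    (forall a x, f (act a x) = act a (f x)) /\
    bijective f.

Definition left_ideal_of (e : A) (x : A) : Prop := exists a : A, x = amul a e.

(* M is a quotient of the left A-module Ae: there is a surjective A-module
   homomorphism Ae -> M (given as a map on A, only its restriction to Ae matters). *)
Definition quotient_of_Ae (e : A) (M : amod A) : Prop :=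
  exists f : A -> M,
    (forall x y, left_ideal_of e x -> left_ideal_of e y -> f (x + y) = f x + f y) /\
    (forall (c : C) x, left_ideal_of e x -> f (c *: x) = c *: f x) /\
    (forall a x, left_ideal_of e x -> f (amul a x) = act a (f x)) /\
    (forall m : M, exists2 x, left_ideal_of e x & f x = m).

Definition generating (e : A) : Prop :=
  idempotent e /\
  forall M : amod A, quasicoherent M -> irreducible M -> quotient_of_Ae e M.

Definition fin_irr_classes : Prop :=
  exists (n : nat) (Ms : 'I_n -> amod A),
    forall M : amod A, quasicoherent M -> irreducible M ->
      exists i, mod_iso M (Ms i).

Definition fin_prim_classes : Prop :=
  exists s : seq A, forall p, primitive p -> exists2 q, q \in s & idem_equiv p q.
End Modules.

(* Main.v *)
From Pilot Require Import Defs.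
From mathcomp Require Import all_boot all_algebra.
From HB Require Import structures.
From mathcomp Require Import zify.
From Stdlib Require Import ClassicalEpsilon Classical FunctionalExtensionality PropExtensionality.
Import Pilot.Defs.
Set Implicit Arguments. Unset Strict Implicit. Unset Printing Implicit Defensive.
Import GRing.Theory.
Local Open Scope ring_scope.

Notation "x ** y" := (amul x y) (at level 40, left associativity).

Record subsp (V : lmodType C) := Subsp {
  sp :> V -> Prop;
  sp0 : sp 0;
  spD : forall x y, sp x -> sp y -> sp (x + y);
  spZ : forall (c : C) x, sp x -> sp (c *: x) }.

Section Quot.
Variables (V : lmodType C) (N : subsp V).

Definition eqv (x y : V) := N (x - y).
Lemma spN x : N x -> N (- x).
Proof. by move=> h; rewrite -scaleN1r; apply: spZ. Qed.
Lemma eqv_refl x : eqv x x. Proof. by rewrite /eqv subrr; apply: sp0. Qed.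
Lemma eqv_eq x y : x = y -> eqv x y. Proof. by move->; apply: eqv_refl. Qed.
Lemma eqv_sym x y : eqv x y -> eqv y x.
Proof. by rewrite /eqv => h; rewrite -opprB; apply: spN. Qed.
Lemma eqv_trans x y z : eqv x y -> eqv y z -> eqv x z.
Proof.
rewrite /eqv => h1 h2; have := spD h1 h2.
by rewrite addrA subrK.
Qed.
Lemma eqvD x x' y y' : eqv x x' -> eqv y y' -> eqv (x + y) (x' + y').
Proof.
rewrite /eqv => h1 h2; have := spD h1 h2.
by rewrite opprD addrACA.
Qed.
Lemma eqvN x x' : eqv x x' -> eqv (- x) (- x').
Proof. by rewrite /eqv => h; rewrite -opprD; apply: spN. Qed.
Lemma eqvZ c x x' : eqv x x' -> eqv (c *: x) (c *: x').
Proof. by rewrite /eqv => h; rewrite -scalerBr; apply: spZ. Qed.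

Definition rep0 (x : V) : V := epsilon (inhabits 0) (fun y => eqv y x).
Lemma rep0P x : eqv (rep0 x) x.
Proof. by apply: (epsilon_spec (inhabits 0) (fun y => eqv y x)); exists x; apply: eqv_refl. Qed.
Lemma rep0_eq x y : eqv x y -> rep0 x = rep0 y.
Proof.
move=> h; rewrite /rep0; congr epsilon; apply: functional_extensionality => z.
apply: propositional_extensionality; split=> hz.
  by apply: eqv_trans hz h.
by apply: eqv_trans hz (eqv_sym h).
Qed.
Lemma rep0_idem x : rep0 (rep0 x) == rep0 x.
Proof. by apply/eqP; apply: rep0_eq; apply: rep0P. Qed.

Definition Qt := {x : V | rep0 x == x}.
HB.instance Definition _ := Choice.on Qt.
Definition pi (x : V) : Qt := exist _ (rep0 x) (rep0_idem x).
Lemma piK q : pi (val q) = q.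
Proof. by apply: val_inj => /=; apply/eqP; apply: (valP q). Qed.
Lemma pi_eq x y : eqv x y -> pi x = pi y.
Proof. by move=> h; apply: val_inj => /=; apply: rep0_eq. Qed.
Lemma val_pi x : eqv (val (pi x)) x.
Proof. by apply: rep0P. Qed.
Lemma pi_inj x y : pi x = pi y -> eqv x y.
Proof.
move=> h; apply: eqv_trans (eqv_sym (val_pi x)) _.
by rewrite h; apply: val_pi.
Qed.

Definition qzero := pi 0.
Definition qadd (a b : Qt) := pi (val a + val b).
Definition qopp (a : Qt) := pi (- val a).
Definition qscale (c : C) (a : Qt) := pi (c *: val a).

Lemma qaddA : associative qadd.
Proof.
move=> a b c; rewrite /qadd; apply: pi_eq.
apply: eqv_trans (eqvD (eqv_refl _) (val_pi _)) _.
apply: eqv_trans _ (eqvD (eqv_sym (val_pi _)) (eqv_refl _)).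
by apply: eqv_eq; rewrite addrA.
Qed.
Lemma qaddC : commutative qadd.
Proof. by move=> a b; rewrite /qadd addrC. Qed.
Lemma qadd0 : left_id qzero qadd.
Proof.
move=> a; rewrite /qadd -[RHS]piK; apply: pi_eq.
apply: eqv_trans (eqvD (val_pi _) (eqv_refl _)) _.
by apply: eqv_eq; rewrite add0r.
Qed.
Lemma qaddN : left_inverse qzero qopp qadd.
Proof.
move=> a; rewrite /qadd /qzero; apply: pi_eq.
apply: eqv_trans (eqvD (val_pi _) (eqv_refl _)) _.
by apply: eqv_eq; rewrite addNr.
Qed.

HB.instance Definition _ := GRing.isZmodule.Build Qt qaddA qaddC qadd0 qaddN.

Lemma qscaleA a b v : qscale a (qscale b v) = qscale (a * b) v.
Proof.
rewrite /qscale; apply: pi_eq.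
apply: eqv_trans (eqvZ _ (val_pi _)) _.
by apply: eqv_eq; rewrite scalerA.
Qed.
Lemma qscale1 : left_id 1 qscale.
Proof. by move=> v; rewrite /qscale scale1r piK. Qed.
Lemma qscaleDr : right_distributive qscale +%R.
Proof.
move=> a u v; rewrite /qscale /= /qadd; apply: pi_eq.
apply: eqv_trans (eqvZ _ (val_pi _)) _.
apply: eqv_trans _ (eqvD (eqv_sym (val_pi _)) (eqv_sym (val_pi _))).
by apply: eqv_eq; rewrite scalerDr.
Qed.
Lemma qscaleDl v : {morph qscale^~ v : a b / a + b}.
Proof.
move=> a b; rewrite /qscale /= /qadd; apply: pi_eq.
apply: eqv_trans _ (eqvD (eqv_sym (val_pi _)) (eqv_sym (val_pi _))).
by apply: eqv_eq; rewrite scalerDl.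
Qed.

HB.instance Definition _ := GRing.Zmodule_isLmodule.Build C Qt qscaleA qscale1 qscaleDr qscaleDl.

Lemma piD x y : pi (x + y) = pi x + pi y.
Proof.
rewrite [RHS]/+%R /= /qadd; apply: pi_eq.
by apply: eqv_sym; apply: eqvD; apply: val_pi.
Qed.
Lemma piZ c x : pi (c *: x) = c *: pi x.
Proof.
rewrite [RHS]/GRing.scale /= /qscale; apply: pi_eq.
by apply: eqv_sym; apply: eqvZ; apply: val_pi.
Qed.
Lemma pi0 : pi 0 = 0.
Proof. by []. Qed.
End Quot.



Section Basic.
Variable A : nuAlg.
Implicit Types x y z : A.

Lemma amul0l x : 0 ** x = 0 :> A.
Proof. by apply: (@addrI _ (0 ** x)); rewrite -amulDl !addr0. Qed.
Lemma amul0r x : x ** 0 = 0 :> A.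
Proof. by apply: (@addrI _ (x ** 0)); rewrite -amulDr !addr0. Qed.
Lemma amulNl x y : (- x) ** y = - (x ** y).
Proof. by apply/eqP; rewrite -subr_eq0 opprK -amulDl addNr amul0l. Qed.
Lemma amulNr x y : x ** (- y) = - (x ** y).
Proof. by apply/eqP; rewrite -subr_eq0 opprK -amulDr addNr amul0r. Qed.
Lemma amulBl x y z : (x - y) ** z = x ** z - y ** z.
Proof. by rewrite amulDl amulNl. Qed.
Lemma amulBr x y z : x ** (y - z) = x ** y - x ** z.
Proof. by rewrite amulDr amulNr. Qed.
Lemma amul_suml (I : Type) (r : seq I) (P : pred I) (F : I -> A) x :
  (\sum_(i <- r | P i) F i) ** x = \sum_(i <- r | P i) (F i ** x).
Proof. exact: (big_morph (fun y => y ** x) (fun a b => amulDl a b x) (amul0l x)). Qed.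
Lemma amul_sumr (I : Type) (r : seq I) (P : pred I) (F : I -> A) x :
  x ** (\sum_(i <- r | P i) F i) = \sum_(i <- r | P i) (x ** F i).
Proof. exact: (big_morph (fun y => x ** y) (fun a b => amulDr x a b) (amul0r x)). Qed.

Variable M : amod A.
Implicit Types m n : M.
Lemma act0r x : act x (0 : M) = 0.
Proof. by apply: (@addrI _ (act x (0:M))); rewrite -actDr !addr0. Qed.
Lemma act0l m : act 0 m = 0.
Proof. by apply: (@addrI _ (act 0 m)); rewrite -actDl !addr0. Qed.
Lemma actNl x m : act (- x) m = - act x m.
Proof. by apply/eqP; rewrite -subr_eq0 opprK -actDl addNr act0l. Qed.
Lemma actBl x y m : act (x - y) m = act x m - act y m.
Proof. by rewrite actDl actNl. Qed.
End Basic.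


Section Span.
Variable V : lmodType C.
Implicit Types s : seq V.

Definition spanl s (x : V) := exists l : seq (C * V),
  (forall t, t \in l -> t.2 \in s) /\ x = \sum_(t <- l) t.1 *: t.2.
Definition inspan s (x : V) :=
  exists c : 'I_(size s) -> C, x = \sum_(k < size s) c k *: s`_k.

Lemma spanl0 s : spanl s 0.
Proof. by exists [::]; split=> //; rewrite big_nil. Qed.
Lemma spanlD s x y : spanl s x -> spanl s y -> spanl s (x + y).
Proof.
move=> [l1 [h1 ->]] [l2 [h2 ->]]; exists (l1 ++ l2); split; last by rewrite big_cat.
by move=> t; rewrite mem_cat => /orP [] ?; [apply: h1 | apply: h2].
Qed.
Lemma spanlZ s c x : spanl s x -> spanl s (c *: x).
Proof.
move=> [l [h ->]]; exists [seq (c * t.1, t.2) | t <- l]; split.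
  by move=> t /mapP [u hu ->] /=; apply: h.
by rewrite big_map scaler_sumr; apply: eq_bigr => t _ /=; rewrite scalerA.
Qed.
Lemma spanl_mem s x : x \in s -> spanl s x.
Proof. by move=> hx; exists [:: (1, x)]; split; [move=> t; rewrite inE => /eqP -> | rewrite big_seq1 scale1r]. Qed.
Lemma spanl_sub s s' x : {subset s <= s'} -> spanl s x -> spanl s' x.
Proof. by move=> hs [l [h ->]]; exists l; split=> // t /h /hs. Qed.
Lemma spanl_sum s (I : Type) (r : seq I) (F : I -> V) :
  (forall i, List.In i r -> spanl s (F i)) -> spanl s (\sum_(i <- r) F i).
Proof.
elim: r => [|i r ih] h; first by rewrite big_nil; apply: spanl0.
rewrite big_cons; apply: spanlD; first by apply: h; left.
by apply: ih => j hj; apply: h; right.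
Qed.

Lemma inspan_spanl s x : inspan s x -> spanl s x.
Proof.
move=> [c ->]; apply: spanl_sum => k _; apply: spanlZ; apply: spanl_mem.
by apply: mem_nth.
Qed.

Lemma spanl_inspan s x : spanl s x -> inspan s x.
Proof.
move=> [l [h ->]]; elim: l h => [|t l ih] h.
  by exists (fun _ => 0); rewrite big_nil; symmetry; apply: big1 => k _; rewrite scale0r.
have [c hc] : inspan s (\sum_(u <- l) u.1 *: u.2).
  by apply: ih => u hu; apply: h; rewrite inE hu orbT.
have ht : t.2 \in s by apply: h; rewrite inE eqxx.
pose i0 : 'I_(size s) := Ordinal (introT idP (etrans (index_mem _ _) ht) : (index t.2 s < size s)%N).
exists (fun k => c k + (if k == i0 then t.1 else 0)).
rewrite big_cons hc addrC.
under [RHS]eq_bigr => k _ do rewrite scalerDl.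
rewrite big_split /=; congr (_ + _).
rewrite (bigD1 i0) //= eqxx big1 ?addr0.
  by rewrite nth_index.
by move=> k /negbTE ->; rewrite scale0r.
Qed.

Lemma dep_rel s (v : seq V) : (size s < size v)%N -> (forall x, x \in v -> inspan s x) ->
  exists c : 'I_(size v) -> C, (exists k, c k != 0) /\ \sum_(k < size v) c k *: v`_k = 0.
Proof.
move=> hsz hv.
have hc : forall k : 'I_(size v), exists d : 'I_(size s) -> C,
    v`_k = \sum_(j < size s) d j *: s`_j.
  by move=> k; apply: hv; apply: mem_nth.
pose d k := proj1_sig (constructive_indefinite_description _ (hc k)).
have hd : forall k : 'I_(size v), v`_k = \sum_(j < size s) d k j *: s`_j.
  by move=> k; rewrite /d; case: constructive_indefinite_description.
pose Mx := \matrix_(k < size v, j < size s) d k j.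
pose K := kermx Mx.
have hK : K != 0.
  rewrite -mxrank_eq0 /K mxrank_ker -lt0n subn_gt0.
  by apply: leq_ltn_trans (rank_leq_col Mx) hsz.
have [i hi] : exists i, row i K != 0.
  apply: NNPP => hn; move/negP: hK; apply; apply/eqP/row_matrixP => i.
  rewrite row0; apply/eqP; apply: NNPP => hh; apply: hn; exists i; exact/negP.
pose x := row i K.
have hx : x *m Mx = 0 by rewrite /x -row_mul mulmx_ker row0.
exists (fun k => x 0 k); split.
  apply: NNPP => hn; move/negP: hi; apply; apply/eqP; apply/rowP => k; rewrite [RHS]mxE.
  apply/eqP; apply: NNPP => hh; apply: hn; exists k; apply/negP; exact: hh.
under eq_bigr => k _ do rewrite hd scaler_sumr.
rewrite exchange_big /=; apply: big1 => j _.
under eq_bigr => k _ do rewrite scalerA.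
rewrite -scaler_suml.
have -> : \sum_(k < size v) x 0 k * d k j = 0.
  transitivity ((x *m Mx) 0 j); last by rewrite hx mxE.
  by rewrite [RHS]mxE; apply: eq_bigr => k _; rewrite [Mx k j]mxE.
by rewrite scale0r.
Qed.
End Span.


Lemma big1_In (V : zmodType) (T : Type) (r : seq T) (F : T -> V) :
  (forall t, List.In t r -> F t = 0) -> \sum_(t <- r) F t = 0.
Proof.
elim: r => [|t r ih] h; first by rewrite big_nil.
by rewrite big_cons h ?ih ?add0r //; [move=> u hu; apply: h; right | left].
Qed.
Lemma eq_big_In (V : zmodType) (T : Type) (r : seq T) (F G : T -> V) :
  (forall t, List.In t r -> F t = G t) -> \sum_(t <- r) F t = \sum_(t <- r) G t.
Proof.
elim: r => [|t r ih] h; first by rewrite !big_nil.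
by rewrite !big_cons h ?ih //; [move=> u hu; apply: h; right | left].
Qed.
Lemma mem_flatten_map (T : Type) (U : eqType) (g : T -> seq U) L k a :
  List.In k L -> a \in g k -> a \in flatten (map g L).
Proof.
elim: L => [|k' L ih] //= [<-|hk] ha; rewrite mem_cat ?ha //.
by rewrite ih ?orbT.
Qed.

Section Auf.
Variable A : nuAlg.
Variables (I : Type) (e : I -> A).
Hypothesis He_idem : forall i, idempotent (e i).
Hypothesis He_orth : forall i j, i <> j -> e i ** e j = 0.
Hypothesis He_fd : forall i j, fin_dim (in_corner (e i) (e j)).
Hypothesis He_dec : forall a : A, exists s : seq (I * I * A),
    a = \sum_(t <- s) e t.1.1 ** t.2 ** e t.1.2.

Definition eL (L : seq I) : A := \sum_(i <- L) e i.

Lemma eL_props L : List.NoDup L -> idempotent (eL L) /\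
  forall i, List.In i L -> eL L ** e i = e i /\ e i ** eL L = e i.
Proof.
elim: L => [|i L ih] hL.
  by split=> //; rewrite /idempotent /eL big_nil amul0l.
have [hi hL'] : ~ List.In i L /\ List.NoDup L by inversion hL.
have [ihi ihe] := ih hL'.
have h1 : e i ** eL L = 0.
  rewrite /eL amul_sumr; apply: big1_In => j hj; apply: He_orth => hij.
  by apply: hi; rewrite hij.
have h2 : eL L ** e i = 0.
  rewrite /eL amul_suml; apply: big1_In => j hj; apply: He_orth => hij.
  by apply: hi; rewrite -hij.
rewrite /eL big_cons -/(eL L); split.
  rewrite /idempotent amulDl !amulDr h1 h2 He_idem ihi.
  by rewrite addr0 add0r.
move=> j [<-|hj]; first by rewrite amulDl amulDr He_idem h1 h2 addr0.
have hij : i <> j by move=> hij; apply: hi; rewrite hij.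
have [e1 e2] := ihe j hj.
by rewrite amulDl amulDr He_orth // (He_orth (nesym hij)) e1 e2 !add0r.
Qed.

Definition covers (L : seq I) (x : A) := exists s : seq (I * I * A),
  x = \sum_(t <- s) e t.1.1 ** t.2 ** e t.1.2 /\
  forall t, List.In t s -> List.In t.1.1 L /\ List.In t.1.2 L.

Lemma covers_ex x : exists L, covers L x.
Proof.
have [s hs] := He_dec x.
exists (List.flat_map (fun t : I * I * A => t.1.1 :: t.1.2 :: nil) s), s; split=> // t ht.
by split; apply/List.in_flat_map; exists t; split=> //=; [left | right; left].
Qed.

Lemma covers_mono L L' x : (forall i, List.In i L -> List.In i L') -> covers L x -> covers L' x.
Proof.
move=> hLL [s [hs hin]]; exists s; split=> // t ht.
by have [h1 h2] := hin t ht; split; apply: hLL.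
Qed.

Lemma covers_unit L x : List.NoDup L -> covers L x -> eL L ** x = x /\ x ** eL L = x.
Proof.
move=> hL [s [-> hin]]; have [_ he] := eL_props hL; split.
  rewrite amul_sumr; apply: eq_big_In => t ht.
  by rewrite !amulA (proj1 (he _ (proj1 (hin t ht)))).
rewrite amul_suml; apply: eq_big_In => t ht.
by rewrite -amulA (proj2 (he _ (proj2 (hin t ht)))).
Qed.

Definition Idec (a b : I) : {a = b} + {a <> b} := excluded_middle_informative (a = b).

Lemma local_unit (xs : seq A) : exists L, List.NoDup L /\
  forall x, List.In x xs -> eL L ** x = x /\ x ** eL L = x.
Proof.
suff [L hL] : exists L, forall x, List.In x xs -> covers L x.
  exists (List.nodup Idec L); split; first by apply: List.NoDup_nodup.
  move=> x hx; apply: covers_unit; first by apply: List.NoDup_nodup.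
  by apply: covers_mono (hL x hx) => i hi; apply/List.nodup_In.
elim: xs => [|x xs [L hL]]; first by exists [::].
have [L0 h0] := covers_ex x.
exists (L0 ++ L) => y [<-|hy].
  by apply: covers_mono h0 => i hi; apply: List.in_or_app; left.
by apply: covers_mono (hL y hy) => i hi; apply: List.in_or_app; right.
Qed.

Lemma corner_span_eL L : exists s : seq A, forall y,
  eL L ** y = y -> y ** eL L = y -> spanl s y.
Proof.
have hs : forall i j, exists s : seq A, forall x, in_corner (e i) (e j) x -> spanl s x.
  move=> i j; have [s hs] := He_fd i j; exists s => x hx.
  by apply: inspan_spanl; apply: hs.
pose sf i j := proj1_sig (constructive_indefinite_description _ (hs i j)).
have hsf : forall i j x, in_corner (e i) (e j) x -> spanl (sf i j) x.
  by move=> i j; rewrite /sf; case: constructive_indefinite_description.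
exists (flatten (map (fun i => flatten (map (fun j => sf i j) L)) L)) => y h1 h2.
have -> : y = \sum_(i <- L) \sum_(j <- L) e i ** y ** e j.
  rewrite -{1}h1 -{1}h2 /eL amulA !amul_suml; apply: eq_bigr => i _.
  by rewrite amul_sumr.
apply: spanl_sum => i hi; apply: spanl_sum => j hj.
apply: spanl_sub (hsf i j _ _); last by exists y.
move=> a ha; apply: (@mem_flatten_map _ _ (fun i => flatten (map (fun j => sf i j) L)) L i a hi).
by apply: (@mem_flatten_map _ _ (fun j => sf i j) L j a hj).
Qed.

Lemma corner_span (g : A) : exists s : seq A, forall y,
  g ** y = y -> y ** g = y -> spanl s y.
Proof.
have [L [hL hu]] := local_unit [:: g].
have [u1 u2] := hu g (or_introl erefl).
have [s hs] := corner_span_eL L; exists s => y h1 h2; apply: hs.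
  by rewrite -h1 amulA u1.
by rewrite -h2 -amulA u2.
Qed.
End Auf.


Section Core.
Variable A : nuAlg.
Variable p : A.
Hypothesis Hp : primitive p.
Variable s0 : seq A.
Hypothesis hs0 : forall y, p ** y = y -> y ** p = y -> spanl s0 y.

Lemma p_idem : p ** p = p. Proof. by case: Hp. Qed.
Lemma p_neq0 : p <> 0. Proof. by case: Hp => _ []. Qed.

Definition inC (y : A) := p ** y = y /\ y ** p = y.

Lemma inC_pbp b : inC (p ** b ** p).
Proof. by split; rewrite ?amulA ?p_idem // -amulA p_idem. Qed.

Section Pow.
Variable z : A.
Hypothesis hz : inC z.

Fixpoint pw (k : nat) : A := if k is k'.+1 then z ** pw k' else p.

Lemma pw_inC k : inC (pw k).
Proof.
elim: k => [|k [ih1 ih2]] /=; first by split; apply: p_idem.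
by split; rewrite ?amulA ?(proj1 hz) // -amulA ih2.
Qed.
Lemma pw_add a b : pw a ** pw b = pw (a + b)%N.
Proof.
elim: a => [|a ih] /=; first by rewrite (proj1 (pw_inC b)).
by rewrite -amulA ih.
Qed.
Lemma pw1 : pw 1 = z. Proof. by rewrite /= (proj2 hz). Qed.
Lemma pwS' k : pw k.+1 = pw k ** z.
Proof. by rewrite -pw1 pw_add addn1. Qed.

Definition S t (x : A) := exists l : seq (C * nat), x = \sum_(u <- l) u.1 *: pw (t + u.2)%N.

Lemma S0 t : S t 0. Proof. by exists [::]; rewrite big_nil. Qed.
Lemma SD t x y : S t x -> S t y -> S t (x + y).
Proof. by move=> [l1 ->] [l2 ->]; exists (l1 ++ l2); rewrite big_cat. Qed.
Lemma SZ t c x : S t x -> S t (c *: x).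
Proof.
move=> [l ->]; exists [seq (c * u.1, u.2) | u <- l].
by rewrite big_map scaler_sumr; apply: eq_bigr => u _; rewrite scalerA.
Qed.
Lemma S_mono t d x : S (t + d)%N x -> S t x.
Proof.
move=> [l ->]; exists [seq (u.1, d + u.2) | u <- l].
by rewrite big_map; apply: eq_bigr => u _ /=; rewrite addnA.
Qed.
Lemma S_mull t a x : S t x -> S (a + t)%N (pw a ** x).
Proof.
move=> [l ->]; exists l; rewrite amul_sumr; apply: eq_bigr => u _.
by rewrite amulZr pw_add addnA.
Qed.
Lemma S_pw t : S t (pw t).
Proof. by exists [:: (1, 0%N)]; rewrite big_seq1 addn0 scale1r. Qed.

Lemma rel_step n (c : 'I_n -> C) t : (exists k, c k != 0) ->
  \sum_(k < n) c k *: pw (t + k)%N = 0 -> exists M, (t <= M)%N /\ S M.+1 (pw M).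
Proof.
elim: n c t => [|n ih] c t [k hk]; first by exfalso; case: k {hk} => m; rewrite ltn0.
rewrite big_ord_recl /= addn0 => hrel.
have [hc0|hc0] := eqVneq (c ord0) 0.
  have hk' : exists k : 'I_n, c (lift ord0 k) != 0.
    case: (unliftP ord0 k) hk => [j -> hj|-> hk0]; first by exists j.
    by move: hk0; rewrite hc0 eqxx.
  move: hrel; rewrite hc0 scale0r add0r => hrel.
  have hrel' : \sum_(k < n) c (lift ord0 k) *: pw (t.+1 + k)%N = 0.
    apply: (etrans _ hrel); apply: eq_bigr => i _; by rewrite /bump /= add1n ?addSn ?addnS.
  have [M [hM hS]] := ih (fun k => c (lift ord0 k)) t.+1 hk' hrel'.
  by exists M; split=> //; apply: ltnW.
exists t; split=> //.
have -> : pw t = - (c ord0)^-1 *: \sum_(i < n) c (lift ord0 i) *: pw (t + bump 0 i)%N.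
  apply: (@scalerI _ _ (c ord0)) => //.
  rewrite scalerA mulrN mulfV // scaleN1r.
  by apply/eqP; rewrite -addr_eq0 hrel.
apply: SZ; elim/big_ind: _ => [|x y|i _]; [exact: S0|exact: SD|].
apply: SZ; rewrite /bump /= add1n -addSnnS; apply: (@S_mono t.+1 i).
exact: S_pw.
Qed.
End Pow.

Definition nilp (z : A) := exists k, pw z k.+1 = 0.

Lemma core z : inC z -> nilp z \/ exists w, w ** z = p.
Proof.
move=> hz.
pose v := [seq pw z k.+1 | k <- iota 0 (size s0).+1].
have hv : forall x, x \in v -> inspan s0 x.
  move=> x /mapP [k _ ->]; apply: spanl_inspan; have [h1 h2] := pw_inC hz k.+1; exact: hs0.
have hsz : (size s0 < size v)%N by rewrite size_map size_iota.
have [c [hc hrel]] := dep_rel hsz hv.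
have [M [hM hS]] : exists M, (1 <= M)%N /\ S z M.+1 (pw z M).
  apply: (rel_step (c := c)) => //.
  rewrite -[RHS]hrel; apply: eq_bigr => k _.
  have hk : (k < (size s0).+1)%N by apply: (leq_trans (ltn_ord k)); rewrite size_map size_iota.
  by rewrite /v (nth_map 0%N) ?nth_iota ?size_iota // add0n add1n.
have hall : forall j, S z (M + j)%N (pw z M).
  elim=> [|j ih]; first by rewrite addn0; apply: (@S_mono z M 1%N); rewrite addn1.
  case: ih => l ->; apply: (@S_mono z _ 0%N); rewrite addn0.
  elim/big_ind: _ => [|x y|u _]; [exact: S0|exact: SD|]; apply: SZ.
  have -> : pw z (M + j + u.2)%N = pw z (j + u.2)%N ** pw z M.
    by rewrite (pw_add hz); congr pw; lia.
  apply: (@S_mono z _ u.2).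
  have -> : (M + j.+1 + u.2 = (j + u.2) + M.+1)%N by lia.
  by apply: S_mull.
have [l hl] := hall M.
pose E := \sum_(u <- l) u.1 *: pw z (M + u.2)%N.
have hEM : E ** pw z M = pw z M.
  rewrite /E amul_suml [RHS]hl; apply: eq_bigr => u _; rewrite amulZl (pw_add hz).
  by congr (_ *: pw z _); lia.
have hEE : E ** E = E.
  rewrite {2}/E amul_sumr; apply: eq_bigr => u _; rewrite amulZr.
  have -> : pw z (M + u.2)%N = pw z M ** pw z u.2 by rewrite (pw_add hz).
  by rewrite amulA hEM.
have hpE : p ** E = E.
  by rewrite /E amul_sumr; apply: eq_bigr => u _; rewrite amulZr (proj1 (pw_inC hz _)).
have hEp : E ** p = E.
  by rewrite /E amul_suml; apply: eq_bigr => u _; rewrite amulZl (proj2 (pw_inC hz _)).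
have hM' : M = M.-1.+1 by rewrite prednK.
case: Hp => _ [_ hprim]; case: (hprim E hEE (conj hpE hEp)) => hE.
  by left; exists M.-1; rewrite -hM' -hEM hE amul0l.
right; exists (\sum_(u <- l) u.1 *: pw z (M.-1 + u.2)%N).
rewrite amul_suml -hE /E; apply: eq_bigr => u _; rewrite amulZl -(pwS' hz).
by congr (_ *: pw z _); rewrite {2}hM' addSn.
Qed.

Lemma inC_mul a b : inC a -> inC b -> inC (a ** b).
Proof. by move=> [a1 a2] [b1 b2]; split; rewrite ?amulA ?a1 // -amulA b2. Qed.

Lemma pw_pred z (hz : inC z) w k : w ** z = p -> pw z k.+1 = 0 -> pw z k = 0.
Proof.
move=> hw h.
have : pw z k = w ** pw z k.+1 by rewrite /= amulA hw (proj1 (pw_inC hz k)).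
by rewrite h amul0r.
Qed.

Lemma unit_not_nilp z : inC z -> forall w, w ** z = p -> ~ nilp z.
Proof.
move=> hz w hw [k hk]; apply: p_neq0.
suff : pw z 0 = 0 by [].
elim: k hk => [|k ih] h; first exact: (@pw_pred z hz w _ hw h).
by apply: ih; exact: (@pw_pred z hz w _ hw h).
Qed.

Lemma geom y : inC y -> nilp y -> exists w, w ** (p - y) = p.
Proof.
move=> hy [k hk]; exists (\sum_(i < k.+1) pw y i).
suff h : forall n, (\sum_(i < n) pw y i) ** (p - y) = p - pw y n by rewrite h hk subr0.
elim=> [|n ih]; first by rewrite big_ord0 amul0l /= subrr.
rewrite big_ord_recr /= amulDl ih amulBr (proj2 (pw_inC hy n)) -(pwS' hy).
by rewrite addrA subrK.
Qed.

Definition nonunit (y : A) := ~ exists w, w ** y = p.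

Lemma nonunit0 : nonunit 0.
Proof. by move=> [w]; rewrite amul0r => h; apply: p_neq0. Qed.
Lemma nonunitZ c y : nonunit y -> nonunit (c *: y).
Proof. by move=> hn [w hw]; apply: hn; exists (c *: w); rewrite amulZl -amulZr. Qed.

Lemma nonunit_nilp y : inC y -> nonunit y -> nilp y.
Proof. by move=> hy hn; case: (core hy) => // h; case: hn. Qed.

Lemma nonunitD y1 y2 : inC y1 -> inC y2 -> nonunit y1 -> nonunit y2 -> nonunit (y1 + y2).
Proof.
move=> h1 h2 n1 n2 [w hw].
pose w' := p ** w ** p.
have hw'C : inC w' by apply: inC_pbp.
have hw' : w' ** (y1 + y2) = p.
  by rewrite /w' -amulA amulDr (proj1 h1) (proj1 h2) -amulA hw p_idem.
have ha1 : inC (w' ** y1) by apply: inC_mul.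
have ha2 : inC (w' ** y2) by apply: inC_mul.
have nn1 : nilp (w' ** y1).
  apply: nonunit_nilp => // [[v hv]]; apply: n1; exists (v ** w'); by rewrite -amulA.
have nn2 : nilp (w' ** y2).
  apply: nonunit_nilp => // [[v hv]]; apply: n2; exists (v ** w'); by rewrite -amulA.
have [v hv] := geom ha2 nn2.
have e1 : p - w' ** y2 = w' ** y1 by rewrite -hw' amulDr addrK.
by apply: (unit_not_nilp ha1 (w := v)) => //; rewrite -e1.
Qed.

Lemma inC_pax a x : inC (p ** a ** x ** p).
Proof. by rewrite -(amulA p a x); apply: inC_pbp. Qed.

Definition Npred (x : A) := forall a, nonunit (p ** a ** x ** p).
Lemma Npred0 : Npred 0.
Proof. by move=> a; rewrite amul0r amul0l; apply: nonunit0. Qed.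
Lemma NpredD x y : Npred x -> Npred y -> Npred (x + y).
Proof.
move=> hx hy a; rewrite amulDr amulDl; apply: nonunitD => //; apply: inC_pax.
Qed.
Lemma NpredZ c x : Npred x -> Npred (c *: x).
Proof. by move=> hx a; rewrite amulZr amulZl; apply: nonunitZ. Qed.

Definition Nsub : subsp A := @Subsp A Npred Npred0 NpredD NpredZ.

Lemma N_left b x : Npred x -> Npred (b ** x).
Proof.
move=> h a; have -> : p ** a ** (b ** x) ** p = p ** (a ** b) ** x ** p by rewrite !amulA.
by apply: h.
Qed.

Definition actq (a : A) (q : Qt Nsub) : Qt Nsub := pi Nsub (a ** val q).

Lemma pi_act a u : pi Nsub (a ** val (pi Nsub u)) = pi Nsub (a ** u).
Proof.
apply: pi_eq; rewrite /eqv /= -amulBr; apply: N_left; exact: (val_pi Nsub u).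
Qed.

Lemma actq_Dl a b q : actq (a + b) q = actq a q + actq b q.
Proof. by rewrite /actq amulDl piD. Qed.
Lemma actq_Dr a q1 q2 : actq a (q1 + q2) = actq a q1 + actq a q2.
Proof.
rewrite /actq.
have -> : val (q1 + q2) = val (pi Nsub (val q1 + val q2)) by [].
by rewrite pi_act amulDr piD.
Qed.
Lemma actq_Zl c a q : actq (c *: a) q = c *: actq a q.
Proof. by rewrite /actq amulZl piZ. Qed.
Lemma actq_Zr c a q : actq a (c *: q) = c *: actq a q.
Proof.
rewrite /actq.
have -> : val (c *: q) = val (pi Nsub (c *: val q)) by [].
by rewrite pi_act amulZr piZ.
Qed.
Lemma actq_M a b q : actq (a ** b) q = actq a (actq b q).
Proof. by rewrite /actq pi_act amulA. Qed.

Definition Mp : amod A := @AMod A (Qt Nsub) actq actq_Dl actq_Dr actq_Zl actq_Zr actq_M.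

Hypothesis LU : forall x : A, exists a, a ** x = x.

Lemma pi_p_neq0 : pi Nsub p <> 0.
Proof.
move=> h; have : eqv Nsub p 0 by apply: pi_inj; rewrite h.
rewrite /eqv subr0 => /(_ p); apply; exists p.
by rewrite !p_idem.
Qed.

Lemma Mp_props : quasicoherent Mp /\ irreducible Mp /\ exists m : Mp, act p m <> 0.
Proof.
split.
  move=> m; have [a ha] := LU (val m); exists a.
  by rewrite /= /actq ha piK.
split; last first.
  exists (pi Nsub p); rewrite /= /actq pi_act p_idem; exact: pi_p_neq0.
split; first by exists (pi Nsub p); exact: pi_p_neq0.
move=> P [P0 [PD [PZ PA]]].
case: (classic (exists q, P q /\ q <> 0)) => [[q [hq hq0]]|hn]; last first.
  left=> m hm; apply: NNPP => hm0; apply: hn; by exists m.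
right=> m.
have hx : ~ Npred (val q).
  move=> hN; apply: hq0; rewrite -(piK q) -pi0; apply: pi_eq.
  by rewrite /eqv subr0.
have [a ha] : exists a, ~ nonunit (p ** a ** val q ** p).
  by apply: NNPP => hh; apply: hx => a; apply: NNPP => h2; apply: hh; exists a.
have [w' hw'] : exists w, w ** (p ** a ** val q ** p) = p by apply: NNPP.
have -> : m = actq (val m ** w' ** p ** a) q.
  rewrite /actq -[LHS]piK; apply: pi_eq => b.
  have -> : p ** b ** (val m - val m ** w' ** p ** a ** val q) ** p = 0.
    rewrite amulDr amulDl amulNr amulNl.
    have -> : p ** b ** (val m ** w' ** p ** a ** val q) ** p =
              p ** b ** val m ** (w' ** (p ** a ** val q ** p)) by rewrite !amulA.
    by rewrite hw' -!amulA subrr.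
  exact: nonunit0.
exact: PA.
Qed.

Lemma exists_irr : exists M : amod A, quasicoherent M /\ irreducible M /\ exists m : M, act p m <> 0.
Proof. by exists Mp; apply: Mp_props. Qed.

Lemma cyc (M : amod A) (m : M) : irreducible M -> m <> 0 -> (exists a, act a m = m) ->
  forall y : M, exists a, y = act a m.
Proof.
move=> [_ hirr] hm [a0 ha0].
have hsub : submodule (fun y : M => exists a, y = act a m).
  split; first by exists 0; rewrite act0l.
  split; first by move=> x y [a ->] [b ->]; exists (a + b); rewrite actDl.
  split; first by move=> c x [a ->]; exists (c *: a); rewrite actZl.
  by move=> b x [a ->]; exists (b ** a); rewrite actM.
case: (hirr _ hsub) => [h|h //]; exfalso; apply: hm; apply: h; by exists a0.
Qed.

Lemma act_pw (M : amod A) (m : M) z : inC z -> act z m = m -> act p m = m ->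
  forall k, act (pw z k) m = m.
Proof.
move=> hz h1 h2; elim=> [|k ih] //=.
by rewrite actM ih.
Qed.

Lemma fix_not_nilp (M : amod A) (m : M) z : inC z -> act z m = m -> act p m = m ->
  m <> 0 -> ~ nilp z.
Proof.
move=> hz h1 h2 hm [k hk]; apply: hm.
by rewrite -(act_pw hz h1 h2 k.+1) hk act0l.
Qed.

Lemma actpax (M : amod A) a x (m : M) : act (p ** a ** x ** p) m = act p (act a (act x (act p m))).
Proof. by rewrite !actM. Qed.

Lemma kill (M M' : amod A) (m0 : M) (m0' : M') :
  irreducible M' -> quasicoherent M' ->
  m0 <> 0 -> act p m0 = m0 -> m0' <> 0 -> act p m0' = m0' ->
  forall x, act x m0 = 0 -> act x m0' = 0.
Proof.
move=> hirr hqc hm0 hp0 hm0' hp0' x hx.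
apply: NNPP => hxm.
have [a ha] := cyc hirr hxm (hqc (act x m0')) m0'.
pose z := p ** a ** x ** p.
have hz : inC z by apply: inC_pax.
have hzm' : act z m0' = m0' by rewrite actpax hp0' -ha.
have hnn : ~ nilp z by apply: (fix_not_nilp (m := m0')).
have [w hw] : exists w, w ** z = p by case: (core hz).
have hzm : act z m0 = 0 by rewrite actpax hp0 hx !act0r.
by apply: hm0; rewrite -hp0 -hw actM hzm act0r.
Qed.

Lemma iso_same (M M' : amod A) :
  irreducible M -> quasicoherent M -> irreducible M' -> quasicoherent M' ->
  (exists m : M, act p m <> 0) -> (exists m : M', act p m <> 0) -> mod_iso M M'.
Proof.
move=> hi hq hi' hq' [m1 hm1] [m1' hm1'].
set m0 := act p m1; set m0' := act p m1'.
have hp0 : act p m0 = m0 by rewrite /m0 -actM p_idem.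
have hp0' : act p m0' = m0' by rewrite /m0' -actM p_idem.
have k1 := kill hi' hq' hm1 hp0 hm1' hp0'.
have k2 := kill hi hq hm1' hp0' hm1 hp0.
have wd1 : forall a b, act a m0 = act b m0 -> act a m0' = act b m0'.
  move=> a b h; apply/eqP; rewrite -subr_eq0 -actBl; apply/eqP; apply: k1.
  by rewrite actBl h subrr.
have wd2 : forall a b, act a m0' = act b m0' -> act a m0 = act b m0.
  move=> a b h; apply/eqP; rewrite -subr_eq0 -actBl; apply/eqP; apply: k2.
  by rewrite actBl h subrr.
have c1 := cyc hi hm1 (ex_intro _ p hp0).
have c2 := cyc hi' hm1' (ex_intro _ p hp0').
pose ch1 y := proj1_sig (constructive_indefinite_description _ (c1 y)).
have hch1 : forall y, y = act (ch1 y) m0.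
  by move=> y; rewrite /ch1; case: constructive_indefinite_description.
pose ch2 y := proj1_sig (constructive_indefinite_description _ (c2 y)).
have hch2 : forall y, y = act (ch2 y) m0'.
  by move=> y; rewrite /ch2; case: constructive_indefinite_description.
pose f y := act (ch1 y) m0'.
pose g y := act (ch2 y) m0.
have hf : forall a, f (act a m0) = act a m0' by move=> a; apply: wd1; rewrite -hch1.
have hg : forall a, g (act a m0') = act a m0 by move=> a; apply: wd2; rewrite -hch2.
exists f; split.
  move=> x y; rewrite (hch1 x) (hch1 y) -actDl !hf; exact: actDl.
split.
  move=> c x; rewrite (hch1 x) -actZl !hf; exact: actZl.
split.
  move=> a x; rewrite (hch1 x) -actM !hf; exact: actM.
exists g.
  by move=> x; rewrite (hch1 x) hf hg.
by move=> y; rewrite (hch2 y) hg hf.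
Qed.

Lemma equiv_common (q : A) (M : amod A) : primitive q -> irreducible M ->
  (exists m : M, act p m <> 0) -> (exists m : M, act q m <> 0) -> idem_equiv p q.
Proof.
move=> hq hi [m1 hm1] [n1 hn1].
have [hqi [hq0 hqp]] := hq.
set m := act p m1; set n := act q n1.
have hpm : act p m = m by rewrite /m -actM p_idem.
have hqn : act q n = n by rewrite /n -actM hqi.
have [a ha] := cyc hi hn1 (ex_intro _ q hqn) m.
have [b hb] := cyc hi hm1 (ex_intro _ p hpm) n.
pose x := p ** a ** q.
pose y := q ** b ** p.
have hxn : act x n = m by rewrite /x !actM hqn -ha hpm.
have hym : act y m = n by rewrite /y !actM hpm -hb hqn.
pose z := x ** y.
have hz : inC z.
  by split; rewrite /z /x /y ?amulA ?p_idem // -!amulA p_idem.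
have hzm : act z m = m by rewrite /z actM hym hxn.
have hnn : ~ nilp z by apply: (fix_not_nilp (m := m)).
have [w hw] : exists w, w ** z = p by case: (core hz).
pose w' := p ** w ** p.
have hw' : w' ** z = p by rewrite /w' -amulA (proj1 hz) -amulA hw p_idem.
have hyc : in_corner q p y by exists b.
have hvc : in_corner p q (w' ** x) by exists (w ** p ** p ** a); rewrite /w' /x !amulA.
have hyq : q ** y = y by rewrite /y !amulA hqi.
have hxq : x ** q = x by rewrite /x -amulA hqi.
have hpw' : p ** w' = w' by rewrite /w' !amulA p_idem.
have hzd : z = x ** y by [].
clearbody z w' x y.
subst z.
have hR : forall R, w' ** (x ** (y ** R)) = p ** R.
  by move=> R; rewrite [x ** (y ** R)]amulA amulA hw'.
exists y, (w' ** x); split; first by [].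
split; first by [].
split; first by rewrite -amulA hw'.
pose g := y ** (w' ** x).
have hgg : g ** g = g.
  by rewrite /g -!amulA hR [p ** (w' ** x)]amulA hpw'.
have hqg : q ** g = g by rewrite /g amulA hyq.
have hgq : g ** q = g by rewrite /g -!amulA hxq.
have hg0 : g <> 0.
  move=> h0; apply: p_neq0.
  have : p = (w' ** x) ** (g ** y) by rewrite /g -!amulA hR hw' p_idem.
  by rewrite h0 amul0l amul0r.
by case: (hqp g hgg (conj hqg hgq)).
Qed.
End Core.


Section Decomp.
Variable A : nuAlg.

Fixpoint orthl (fs : seq A) : Prop :=
  if fs is f :: fs' then (forall g, g \in fs' -> f ** g = 0 /\ g ** f = 0) /\ orthl fs'
  else True.

Definition good (g : A) (fs : seq A) :=
  (forall f, f \in fs -> idempotent f /\ f <> 0 /\ idem_le f g) /\ orthl fs.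

Lemma orth_nth fs : orthl fs -> forall a b, (a < size fs)%N -> (b < size fs)%N -> a != b ->
  fs`_a ** fs`_b = 0.
Proof.
elim: fs => [|f fs ih] //= [hf ho] [|a] [|b] //= ha hb hab.
- by have [] := hf _ (mem_nth 0 hb).
- by have [] := hf _ (mem_nth 0 ha).
- by apply: ih.
Qed.

Lemma le_trans3 (a b c : A) : idem_le a b -> idem_le b c -> idem_le a c.
Proof.
move=> [h1 h2] [h3 h4]; split.
  by rewrite -h1 amulA h3.
by rewrite -h2 -amulA h4.
Qed.

Variable e0 : A.
Variable s : seq A.
Hypothesis hs : forall y, e0 ** y = y -> y ** e0 = y -> spanl s y.

Lemma good_bound fs : good e0 fs -> (size fs <= size s)%N.
Proof.
move=> [hf ho]; rewrite leqNgt; apply/negP => hlt.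
have hv : forall x, x \in fs -> inspan s x.
  move=> x hx; have [_ [_ [h1 h2]]] := hf x hx; apply: spanl_inspan; exact: hs.
have [c [[k0 hk0] hrel]] := dep_rel hlt hv.
have hmem : fs`_k0 \in fs by apply: mem_nth.
have [hid [hnz _]] := hf _ hmem.
have : fs`_k0 ** \sum_(k < size fs) c k *: fs`_k = c k0 *: fs`_k0.
  rewrite amul_sumr (bigD1 k0) //= amulZr hid big1 ?addr0 // => k hk.
  rewrite amulZr orth_nth ?scaler0 //; first by rewrite eq_sym.
rewrite hrel amul0r => /esym /eqP; rewrite scaler_eq0 (negbTE hk0) /= => /eqP.
exact: hnz.
Qed.

Lemma decomp_aux n : forall g, idempotent g -> idem_le g e0 ->
  (forall fs, good g fs -> (size fs <= n)%N) ->
  exists ps : seq A, (forall q, q \in ps -> primitive q) /\ g = \sum_(q <- ps) q.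
Proof.
elim: n => [|n ih] g hg hge hb.
  case: (classic (g = 0)) => [->|hg0]; first by exists [::]; rewrite big_nil.
  suff: (size [:: g] <= 0)%N by []. apply: hb.
  split=> //; move=> f; rewrite inE => /eqP ->; split=> //; split=> //.
case: (classic (g = 0)) => [->|hg0]; first by exists [::]; rewrite big_nil.
case: (classic (primitive g)) => [hpg|hnp].
  by exists [:: g]; rewrite big_seq1; split=> // q; rewrite inE => /eqP ->.
have [f [hf [hfg [hf0 hfng]]]] : exists f, idempotent f /\ idem_le f g /\ f <> 0 /\ f <> g.
  apply: NNPP => hn; apply: hnp; split=> //; split=> // f hf hfg.
  case: (classic (f = 0)) => [|hf0]; first by left.
  case: (classic (f = g)) => [|hfng]; first by right.
  by exfalso; apply: hn; exists f.
have [hfg1 hfg2] := hfg.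
pose k := g - f.
have hk : idempotent k.
  by rewrite /idempotent /k amulBl !amulBr hg hfg1 hfg2 hf subrr subr0.
have hkg : idem_le k g by split; rewrite /k ?amulBr ?amulBl hg ?hfg1 ?hfg2.
have hk0 : k <> 0 by move=> /eqP; rewrite subr_eq0 => /eqP h; apply: hfng.
have hkf : k ** f = 0 by rewrite /k amulBl hfg1 hf subrr.
have hfk : f ** k = 0 by rewrite /k amulBr hfg2 hf subrr.
have [ps1 [hp1 e1]] : exists ps : seq A, (forall q, q \in ps -> primitive q) /\ f = \sum_(q <- ps) q.
  apply: ih => //; first by apply: le_trans3 hfg hge.
  move=> fs [hfs ho]; suff: (size (k :: fs) <= n.+1)%N by []. apply: hb; split.
    move=> f'; rewrite inE => /orP [/eqP ->|hf']; first by [].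
    have [h1 [h2 h3]] := hfs f' hf'; split=> //; split=> //; apply: le_trans3 h3 hfg.
  split=> // f' hf'; have [_ [_ [h1 h2]]] := hfs f' hf'.
  have [h3 h4] := le_trans3 (conj h1 h2) hfg.
  by rewrite /k amulBl amulBr h3 h1 h4 h2 !subrr.
have [ps2 [hp2 e2]] : exists ps : seq A, (forall q, q \in ps -> primitive q) /\ k = \sum_(q <- ps) q.
  apply: ih => //; first by apply: le_trans3 hkg hge.
  move=> fs [hfs ho]; suff: (size (f :: fs) <= n.+1)%N by []. apply: hb; split.
    move=> f'; rewrite inE => /orP [/eqP ->|hf']; first by [].
    have [h1 [h2 h3]] := hfs f' hf'; split=> //; split=> //; apply: le_trans3 h3 hkg.
  split=> // f' hf'; have [_ [_ [h1 h2]]] := hfs f' hf'.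
  split.
    by rewrite -h1 amulA hfk amul0l.
  by rewrite -h2 -amulA hkf amul0r.
exists (ps1 ++ ps2); split.
  by move=> q; rewrite mem_cat => /orP [] ?; [apply: hp1 | apply: hp2].
rewrite big_cat /= -e1 -e2 /k addrCA subrr addr0 //.
Qed.

Lemma decomp : idempotent e0 ->
  exists ps : seq A, (forall q, q \in ps -> primitive q) /\ e0 = \sum_(q <- ps) q.
Proof.
move=> he; apply: (@decomp_aux (size s) e0 he (conj he he)).
by move=> fs hfs; apply: good_bound.
Qed.
End Decomp.


Lemma in_In (T : eqType) (x : T) (s : seq T) : x \in s -> List.In x s.
Proof.
elim: s => [|y s ih] //; rewrite inE => /orP [/eqP ->|h]; [by left | right; exact: ih].
Qed.

Section Gen.
Variable A : nuAlg.

Lemma act_sum (M : amod A) (ps : seq A) (m : M) :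
  act (\sum_(q <- ps) q) m = \sum_(q <- ps) act q m.
Proof. exact: (big_morph (fun a => act a m) (fun a b => actDl a b m) (act0l m)). Qed.

Lemma sum_nz (M : amod A) (ps : seq A) (m : M) :
  act (\sum_(q <- ps) q) m <> 0 -> exists2 q, q \in ps & act q m <> 0.
Proof.
rewrite act_sum => h; apply: NNPP => hn; apply: h; apply: big1_seq => q hq.
by apply: NNPP => hq0; apply: hn; exists q.
Qed.

Lemma equiv_act (p q : A) (M : amod A) (m : M) : idem_equiv p q -> act p m <> 0 ->
  exists m' : M, act q m' <> 0.
Proof.
move=> [u [v [[x hu] [_ [hvu _]]]]] hpm; apply: NNPP => hn; apply: hpm.
have hu0 : act u m = 0.
  rewrite hu actM actM; apply: NNPP => h; apply: hn; by exists (act x (act p m)).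
by rewrite -hvu actM hu0 act0r.
Qed.

Lemma equiv_sym_act (p q : A) (M : amod A) (m : M) : idem_equiv p q -> act q m <> 0 ->
  exists m' : M, act p m' <> 0.
Proof.
move=> [u [v [hu [[y hv] [_ huv]]]]] hqm; apply: NNPP => hn; apply: hqm.
have hv0 : act v m = 0.
  rewrite hv actM actM; apply: NNPP => h; apply: hn; by exists (act y (act q m)).
by rewrite -huv actM hv0 act0r.
Qed.

Lemma equiv_prim (p q : A) : primitive p -> idem_equiv p q -> primitive q.
Proof.
move=> [hpi [hp0 hpp]] [u [v [[x hu] [[y hv] [hvu huv]]]]].
have hup : u ** p = u by rewrite hu -amulA hpi.
have hpv : p ** v = v by rewrite hv !amulA hpi.
have hqi : q ** q = q by rewrite -huv -amulA [v ** (u ** v)]amulA hvu hpv.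
have hqu : q ** u = u by rewrite hu !amulA hqi.
have hvq : v ** q = v by rewrite hv -amulA hqi.
split=> //; split.
  move=> hq0; apply: hp0; by rewrite -hvu hu hq0 !amul0l amul0r.
move=> g hg [hqg hgq].
pose h := v ** g ** u.
have hh : idempotent h.
  rewrite /idempotent /h -!amulA [u ** (v ** (g ** u))]amulA huv.
  by rewrite [q ** (g ** u)]amulA hqg [g ** (g ** u)]amulA hg.
have hhp : idem_le h p.
  split; first by rewrite /h !amulA hpv.
  by rewrite /h -!amulA hup.
have hg' : g = u ** h ** v.
  by rewrite /h -!amulA huv hgq amulA huv hqg.
case: (hpp h hh hhp) => hh0; [left | right].
  by rewrite hg' hh0 amul0r amul0l.
by rewrite hg' hh0 hup huv.
Qed.

Definition regular : amod A :=
  @AMod A A (@amul A) (@amulDl A) (@amulDr A) (@amulZl A) (@amulZr A)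
    (fun a b m => esym (amulA a b m)).

Definition pickM (q : A) : amod A :=
  epsilon (inhabits regular)
    (fun M => quasicoherent M /\ irreducible M /\ exists m : M, act q m <> 0).

Lemma pickM_spec (q : A) (M : amod A) : quasicoherent M -> irreducible M ->
  (exists m : M, act q m <> 0) ->
  quasicoherent (pickM q) /\ irreducible (pickM q) /\ exists m : pickM q, act q m <> 0.
Proof.
move=> h1 h2 h3; apply: (epsilon_spec (inhabits regular)
  (fun M => quasicoherent M /\ irreducible M /\ exists m : M, act q m <> 0)).
by exists M.
Qed.

Lemma iso_inv (M N : amod A) : mod_iso M N -> exists g : N -> M,
  (forall a y, g (act a y) = act a (g y)) /\ (forall y, y <> 0 -> g y <> 0) /\
  exists f : M -> N, (forall a x, f (act a x) = act a (f x)) /\ (forall x, x <> 0 -> f x <> 0)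
    /\ cancel f g /\ cancel g f.
Proof.
move=> [f [fD [fZ [fA [g gf fg]]]]].
have f0 : f 0 = 0 by apply: (@addrI _ (f 0)); rewrite -fD !addr0.
exists g; split.
  by move=> a y; apply: (can_inj gf); rewrite fg fA fg.
split.
  by move=> y hy h0; apply: hy; rewrite -(fg y) h0 f0.
exists f; split=> //; split=> //.
by move=> x hx h0; apply: hx; rewrite -(gf x) h0 -f0 gf.
Qed.
End Gen.

Section Main.
Variable A : nuAlg.
Variables (I : Type) (e : I -> A).
Hypothesis He_idem : forall i, idempotent (e i).
Hypothesis He_orth : forall i j, i <> j -> e i ** e j = 0.
Hypothesis He_fd : forall i j, fin_dim (in_corner (e i) (e j)).
Hypothesis He_dec : forall a : A, exists s : seq (I * I * A),
    a = \sum_(t <- s) e t.1.1 ** t.2 ** e t.1.2.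

Lemma LU (x : A) : exists a, a ** x = x.
Proof.
have [L [_ hL]] := local_unit He_idem He_orth He_dec [:: x].
by exists (eL e L); apply: (proj1 (hL x (or_introl erefl))).
Qed.

Lemma spanC (g : A) : exists s : seq A, forall y, g ** y = y -> y ** g = y -> spanl s y.
Proof. exact: corner_span He_idem He_orth He_fd He_dec g. Qed.

Lemma prim_for_irr (M : amod A) : quasicoherent M -> irreducible M ->
  exists2 p, primitive p & exists m : M, act p m <> 0.
Proof.
move=> hq [[m hm] _]; have [a ha] := hq m.
have [L [hL hu]] := local_unit He_idem He_orth He_dec [:: a].
have [u1 _] := hu a (or_introl erefl).
have hem : act (eL e L) m = m by rewrite -ha -actM u1.
have [hid _] := eL_props He_idem He_orth hL.
have [s hs] := corner_span_eL He_fd L.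
have [ps [hps hsum]] := decomp hs hid.
have : act (\sum_(q <- ps) q) m <> 0 by rewrite -hsum hem.
move=> /sum_nz [q hqin hqm]; exists q; first by apply: hps hqin.
by exists m.
Qed.

Lemma fin_from_list (qs : seq A) :
  (forall M : amod A, quasicoherent M -> irreducible M ->
     exists2 q, q \in qs & primitive q /\ exists m : M, act q m <> 0) ->
  fin_irr_classes A.
Proof.
move=> hqs; exists (size qs), (fun k => pickM qs`_k) => M hq hi.
have [q hqin [hqp hqm]] := hqs M hq hi.
have hk : (index q qs < size qs)%N by rewrite index_mem.
exists (Ordinal hk) => /=; rewrite nth_index //.
have [h1 [h2 h3]] := pickM_spec hq hi hqm.
have [s hs] := spanC q.
apply: (iso_same hqp hs) => //.
Qed.

Lemma gen_to_fin : (exists e0 : A, generating e0) -> fin_irr_classes A.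
Proof.
move=> [e0 [he0 hgen]].
have [s hs] := spanC e0.
have [ps [hps hsum]] := decomp hs he0.
apply: (fin_from_list (qs := ps)) => M hq hi.
have [f [_ [_ [fA fS]]]] := hgen M hq hi.
have hle : left_ideal_of e0 e0 by exists e0; rewrite he0.
have hfe : act e0 (f e0) = f e0 by rewrite -fA // he0.
have hfe0 : f e0 <> 0.
  move=> h0; have [[m hm] _] := hi; apply: hm.
  have [x [a ->] <-] := fS m.
  by rewrite -he0 amulA fA ?hle // h0 act0r.
have : act (\sum_(q <- ps) q) (f e0) <> 0 by rewrite -hsum hfe.
move=> /sum_nz [q hqin hqm]; exists q => //; split; first by apply: hps hqin.
by exists (f e0).
Qed.

Lemma fin_to_gen : fin_irr_classes A -> exists e0 : A, generating e0.
Proof.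
move=> [n [Ms hMs]].
pose P k a := exists m : Ms k, m <> 0 /\ act a m = m.
pose ak k := epsilon (inhabits (0 : A)) (P k).
have hak : forall k, (exists a, P k a) -> P k (ak k).
  by move=> k h; apply: (epsilon_spec (inhabits (0 : A)) (P k)).
have [L [hL hu]] := local_unit He_idem He_orth He_dec [seq ak k | k <- enum 'I_n].
have [hid _] := eL_props He_idem He_orth hL.
exists (eL e L); split=> // M hq hi.
have [k hiso] := hMs M hq hi.
have [g [gA [g0 [f [fA [f0 [fg gf]]]]]]] := iso_inv hiso.
have [[m hm] hirr] := hi.
have [a ha] := hq m.
have hPk : exists a, P k a by exists a, (f m); split; [apply: f0 | rewrite -fA ha].
have [mk [hmk0 hmk]] := hak k hPk.
have hin : List.In (ak k) [seq ak k | k <- enum 'I_n].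
  by apply: in_In; apply: map_f; rewrite mem_enum.
have [u1 _] := hu _ hin.
have hmk' : act (eL e L) mk = mk by rewrite -hmk -actM u1.
set m' := g mk.
have hm' : act (eL e L) m' = m' by rewrite /m' -gA hmk'.
have hm'0 : m' <> 0 by apply: g0.
exists (fun x => act x m'); split.
  by move=> x y _ _; rewrite actDl.
split; first by move=> c x _; rewrite actZl.
split; first by move=> b x _; rewrite actM.
move=> y.
have hsub : submodule (fun y : M => exists2 x, left_ideal_of (eL e L) x & act x m' = y).
  split; first by exists 0; [exists 0; rewrite amul0l | rewrite act0l].
  split; first by move=> x1 x2 [z1 [a1 ->] <-] [z2 [a2 ->] <-];
    exists ((a1 + a2) ** eL e L); [by exists (a1 + a2) | rewrite amulDl actDl].
  split; first by move=> c x [z [a1 ->] <-]; exists ((c *: a1) ** eL e L);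
    [by exists (c *: a1) | rewrite amulZl actZl].
  by move=> b x [z [a1 ->] <-]; exists ((b ** a1) ** eL e L);
    [by exists (b ** a1) | rewrite !actM].
case: (hirr _ hsub) => [h|h]; last by apply: h.
exfalso; apply: hm'0; apply: h; exists (eL e L) => //.
by exists (eL e L); rewrite hid.
Qed.

Lemma fin_to_prim : fin_irr_classes A -> fin_prim_classes A.
Proof.
move=> [n [Ms hMs]].
pose Q k q := primitive q /\ exists m : Ms k, act q m <> 0.
pose qk k := epsilon (inhabits (0:A)) (Q k).
exists [seq qk k | k <- enum 'I_n] => p hp.
have [s hs] := spanC p.
have [M [hq [hi hpm]]] := exists_irr hp hs LU.
have [k hiso] := hMs M hq hi.
have [g [gA [g0 [f [fA [f0 [fg gf]]]]]]] := iso_inv hiso.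
have hQ : exists q, Q k q.
  exists p; split=> //; case: hpm => m hm; exists (f m); rewrite -fA; exact: f0.
have [hqp [mk hmk]] := epsilon_spec (inhabits (0:A)) (Q k) hQ.
exists (qk k); first by apply: map_f; rewrite mem_enum.
apply: (equiv_common hp hs hqp hi hpm).
exists (g mk); rewrite -gA; exact: g0.
Qed.

Lemma prim_to_fin : fin_prim_classes A -> fin_irr_classes A.
Proof.
move=> [s hs]; apply: (fin_from_list (qs := s)) => M hq hi.
have [p hp [m hpm]] := prim_for_irr hq hi.
have [q hqs heq] := hs p hp.
exists q => //; split; first exact: equiv_prim hp heq.
exact: equiv_act heq hpm.
Qed.

Lemma all_main : ((exists e0 : A, generating e0) <-> fin_irr_classes A) /\ (fin_irr_classes A <-> fin_prim_classes A).
Proof.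
split; split.
- exact: gen_to_fin.
- exact: fin_to_gen.
- exact: fin_to_prim.
- exact: prim_to_fin.
Qed.
End Main.



Close Scope ring_scope.

Theorem corollary6p4 (A : nuAlg) (HA : AUF A) :
  ((exists e : A, generating e) <-> fin_irr_classes A) /\
  (fin_irr_classes A <-> fin_prim_classes A).
Proof.
case: HA => I [e [h1 [h2 [h3 h4]]]].
exact: (all_main h1 h2 h3 h4).
Qed.
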